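(* Let $L$ be a finite multiset of positive integers. If $L$ admits a special linear realization of type $1$, then for every positive integer $b$ the multiset $L\cup\{2^b\}$ also admits a special linear realization of type $1$.
   Context: For a multiset $L$ of positive integers with $|L|=v-1$, each at most $v-1$, a linear realization of $L$ is a Hamiltonian path $[x_0,x_1,\dots,x_{v-1}]$ of the complete graph on $\{0,1,\dots,v-1\}$ such that the multiset $\{|x_i-x_{i+1}| : i=0,\dots,v-2\}$ equals $L$. A linear realization of $L$ is special of type $1$ if the vertices $|L|$ and $|L|-1$ are adjacent (consecutive) in the path. $\{2^b\}$ denotes the multiset of $b$ copies of $2$, and $\cup$ is multiset union. *)

(* Defs.v *)
From mathcomp Require Import all_boot.
Set Implicit Arguments. Unset Strict Implicit. Unset Printing Implicit Defensive.

(* Multisets of naturals are represented by sequences, compared up to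
   permutation (perm_eq). *)

Definition absd (x y : nat) : nat := (x - y) + (y - x).

Definition edges (p : seq nat) : seq (nat * nat) := zip p (behead p).

Definition edge_lengths (p : seq nat) : seq nat :=
  [seq absd e.1 e.2 | e <- edges p].

(* p = [x_0,...,x_{v-1}] is a linear realization of L, where v = |L| + 1:
   p is a Hamiltonian path of K_v on {0,...,v-1} (a permutation of the
   vertex set) and its multiset of edge lengths equals L. *)
Definition linear_realization (L : seq nat) (p : seq nat) : bool :=
  perm_eq p (iota 0 (size L).+1) && perm_eq (edge_lengths p) L.

Definition adjacent_in (p : seq nat) (a b : nat) : bool :=
  has (fun e => (e == (a, b)) || (e == (b, a))) (edges p).

Definition special1_realization (L : seq nat) (p : seq nat) : bool :=
  linear_realization L p && adjacent_in p (size L) (size L).-1.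

Definition admits_special1 (L : seq nat) : Prop :=
  exists p : seq nat, special1_realization L p.

(* Main.v *)
Require Import Defs.
From mathcomp Require Import all_boot zify.

Lemma edges_cons2 a b s : edges (a :: b :: s) = (a, b) :: edges (b :: s).
Proof. by []. Qed.

Lemma edges_cat s x t : edges (s ++ x :: t) = edges (rcons s x) ++ edges (x :: t).
Proof.
case: s => [|a s] //=.
elim: s a => [|c s IH] a //=.
by rewrite edges_cons2 IH.
Qed.

Lemma el_cat s x t :
  edge_lengths (s ++ x :: t) = edge_lengths (rcons s x) ++ edge_lengths (x :: t).
Proof. by rewrite /edge_lengths edges_cat map_cat. Qed.

Lemma has_edges (P : pred (nat * nat)) p :
  has P (edges p) -> exists A x y B, p = A ++ x :: y :: B /\ P (x, y).
Proof.
elim: p => [|a p IH] //.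
case: p IH => [|c p] IH //.
rewrite edges_cons2 /= => /orP [H|H].
  by exists [::], a, c, p.
have [A [x [y [B [E Hp]]]]] := IH H.
by exists (a :: A), x, y, B; rewrite E.
Qed.

Lemma perm_admits L L' : perm_eq L L' -> admits_special1 L -> admits_special1 L'.
Proof.
move=> HL [p /andP [/andP [H1 H2] H3]].
exists p; rewrite /special1_realization /linear_realization -(perm_size HL) H1 H3 /=.
by rewrite (perm_trans H2 HL).
Qed.

Lemma step L : admits_special1 L -> admits_special1 (rcons L 2).
Proof.
move=> [p /andP [/andP [H1 H2] H3]].
set n := size L in H1 H3.
have [A [x [y [B [E Hxy]]]]] := has_edges _ _ H3.
have Hu : uniq p by rewrite (perm_uniq H1) iota_uniq.
have Hxy' : x != y.
  by move: Hu; rewrite E cat_uniq /= inE negb_or => /and5P [_ _ /norP [? _] _ _].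
exists (A ++ x :: n.+1 :: y :: B).
rewrite /special1_realization /linear_realization size_rcons.
apply/andP; split; [apply/andP; split|].
- have P1 : perm_eq (A ++ x :: n.+1 :: y :: B) (n.+1 :: p).
    apply/permP => f; rewrite E /= !count_cat /=.
    by lia.
  apply: (perm_trans P1).
  rewrite -[n.+2]addn1 iotaD add0n (_ : iota n.+1 1 = [:: n.+1]) // cats1.
  by rewrite perm_sym perm_rcons perm_cons perm_sym.
- rewrite E el_cat in H2; rewrite el_cat.
  apply: (@perm_trans _ (edge_lengths (rcons A x) ++ edge_lengths [:: x, y & B] ++ [:: 2])).
    rewrite perm_cat2l /edge_lengths !edges_cons2 /=.
    have Ha : absd x y = 1 /\ ((absd x n.+1 = 1 /\ absd n.+1 y = 2) \/ (absd x n.+1 = 2 /\ absd n.+1 y = 1)).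
      case/orP: Hxy Hxy' => /eqP [-> ->]; rewrite /absd; case: (n) => //= k _; lia.
    case: Ha => -> [[-> ->]|[-> ->]]; apply/permP => f; rewrite /= count_cat /=; lia.
  by rewrite catA -[rcons L 2]cats1 perm_cat2r.
- rewrite /adjacent_in edges_cat has_cat !edges_cons2 /= -/n.
  by case/orP: Hxy => /eqP [-> ->]; rewrite !eqxx !orbT.
Qed.

Theorem lemma2p2 (L : seq nat) :
  all (fun x => 0 < x) L ->
  admits_special1 L ->
  forall b : nat, 0 < b -> admits_special1 (L ++ nseq b 2).
Proof.
move=> _ HL b _; elim: b => [|b IH]; first by rewrite cats0.
apply: (perm_admits _ _ _ (step _ IH)).
rewrite -cats1 -catA perm_cat2l /= -[2 :: nseq b 2]cat1s.
by rewrite perm_catC.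
Qed.
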